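(* Let $k$ be a square-free positive integer and $d$ a positive integer. Then $$e^*_k(d^2)=k^2\sum_{m\mid k}\mu(m)\Bigl(\prod_{p\mid m,\ p\text{ prime}}\frac{p^2-1}{p^2+1}\Bigr)e^*_1(d_m^2),$$ where $d_m=\max\{x\mid d:\gcd(x,m)=1\}=d/\prod_{p\mid m}p^{\nu_p(d)}$.
   Context: $\nu_p$ is the $p$-adic valuation and $\mu$ the Möbius function. For a positive integer $d$, define $\gamma_c(d^2)$ for $c\ge1$ as the multiplicative function of $c$ (i.e. $\gamma_{c}(d^2)=\prod_{p^r\| c}\gamma_{p^r}(d^2)$, $\gamma_1=1$) with: for $p=2$, $\gamma_{2^r}(d^2)=2^{r/2}$ if $r\ge2$ is even and $\nu_2(d^2)=r-2$; $=2^{(r-1)/2}$ if $r$ is odd and $\nu_2(d^2)\ge r-1$; $=0$ otherwise. For $p$ odd, $\gamma_{p^r}(d^2)=p^{r/2-1}(p-1)$ if $r\ge2$ is even and $\nu_p(d^2)\ge r$; $=p^{(r-1)/2}$ if $r$ is odd and $\nu_p(d^2)=r-1$; $=0$ otherwise. For a positive integer $k$, $e^*_k(d^2)=\sum_{c=1}^\infty\frac{\gcd(c,2k)^2}{c^2}\gamma_c(d^2)$ (absolutely convergent). *)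

(* Defs.v *)
From Stdlib Require Import Reals ClassicalEpsilon.
From mathcomp Require Import all_boot.

Set Implicit Arguments. Unset Strict Implicit. Unset Printing Implicit Defensive.

(* gamma_{p^r}(n) for a prime p, exponent r >= 1, n = d^2 *)
Definition gamma_pp (p r n : nat) : nat :=
  if p == 2 then
    (if (2 <= r) && ~~ odd r && (logn 2 n == r - 2) then 2 ^ (r./2)
     else if odd r && (r - 1 <= logn 2 n) then 2 ^ ((r - 1)./2)
     else 0)
  else
    (if (2 <= r) && ~~ odd r && (r <= logn p n) then p ^ (r./2 - 1) * (p - 1)
     else if odd r && (logn p n == r - 1) then p ^ ((r - 1)./2)
     else 0).

Definition gamma (c n : nat) : nat :=
  \prod_(p <- primes c) gamma_pp p (logn p c) n.

Definition estar_term (k d c : nat) : R :=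
  Rmult (Rdiv (pow (INR (gcdn c (2 * k))) 2) (pow (INR c) 2)) (INR (gamma c (d ^ 2))).

(* value of a convergent series sum_{i>=0} f i (0 if it does not converge) *)
Definition series_value (f : nat -> R) : R :=
  match excluded_middle_informative (exists l, infinite_sum f l) with
  | left H => proj1_sig (constructive_indefinite_description _ H)
  | right _ => R0
  end.

(* e*_k(d^2) = sum_{c >= 1} gcd(c,2k)^2/c^2 gamma_c(d^2) *)
Definition estar (k d : nat) : R := series_value (fun i => estar_term k d i.+1).

Definition squarefree (m : nat) : bool := all (fun p => logn p m == 1) (primes m).
Definition mobius (m : nat) : R :=
  if squarefree m then pow (Ropp R1) (size (primes m)) else R0.

Definition d_part (d m : nat) : nat := d %/ \prod_(p <- primes m) p ^ logn p d.

Definition prime_factor_prod (m : nat) : R :=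
  foldr Rmult R1
    (map (fun p => Rdiv (Rminus (pow (INR p) 2) R1) (Rplus (pow (INR p) 2) R1)) (primes m)).

(* Main.v *)
Require Import Defs.
From Stdlib Require Import Reals.
From mathcomp Require Import all_boot.
From HB Require Import structures.
From Stdlib Require Import Lra ClassicalEpsilon.
From mathcomp Require Import zify.
Set Implicit Arguments. Unset Strict Implicit. Unset Printing Implicit Defensive.
Lemma logn_coprime0 q m n : coprime m n -> logn q m = 0 \/ logn q n = 0.
Proof.
move=> cmn; case: (posnP (logn q m)) => [|]; first by left.
rewrite logn_gt0 mem_primes => /and3P[qp _ qm]; right.
apply: logn_coprime; exact: coprime_dvdl qm cmn.
Qed.

Lemma gcdM_coprime m n k : 0 < m -> 0 < n -> 0 < k -> coprime m n ->
  gcdn (m * n) k = gcdn m k * gcdn n k.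
Proof.
move=> m0 n0 k0 cmn; apply: eqn_from_log.
- by rewrite gcdn_gt0 muln_gt0 m0 n0.
- by rewrite muln_gt0 !gcdn_gt0 m0 n0.
move=> q; rewrite lognM ?gcdn_gt0 ?m0 ?n0 // !logn_gcd ?muln_gt0 ?m0 ?n0 // lognM //.
case: (logn_coprime0 q cmn) => ->; lia.
Qed.

Lemma pp_gt0 q M : 0 < q ^ logn q M.
Proof. case: q => [|q]; last by rewrite expn_gt0. by rewrite /logn. Qed.

Lemma prod_pp (M : nat) (s : seq nat) : 0 < M -> uniq s -> all prime s ->
  (\prod_(q <- s) q ^ logn q M %| M) /\
  (forall q, prime q -> logn q (\prod_(q <- s) q ^ logn q M) = if q \in s then logn q M else 0).
Proof.
move=> M0; elim: s => [|q0 s IH] /=.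
  by rewrite big_nil dvd1n; split=> // q _; rewrite logn1.
case/andP=> q0s us /andP[pq0 ps]; have [IH1 IH2] := IH us ps.
have P0 : 0 < \prod_(q <- s) q ^ logn q M by apply: prodn_gt0 => q; apply: pp_gt0.
have L0 : logn q0 (\prod_(q <- s) q ^ logn q M) = 0 by rewrite IH2 // (negbTE q0s).
have cop : coprime (q0 ^ logn q0 M) (\prod_(q <- s) q ^ logn q M).
  apply: coprimeXl; rewrite prime_coprime //; apply/negP => H.
  have : 0 < logn q0 (\prod_(q <- s) q ^ logn q M) by rewrite logn_gt0 mem_primes pq0 P0 H.
  by rewrite L0.
rewrite big_cons; split.
  by rewrite Gauss_dvd // IH1 pfactor_dvdnn.
move=> q pq; rewrite lognM ?pp_gt0 // IH2 // (lognX q q0) (logn_prime q pq0) in_cons.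
case: (eqVneq q q0) => [->|nq] /=; first by rewrite (negbTE q0s) muln1 addn0.
by rewrite muln0.
Qed.

Lemma d_part_gt0 d m : 0 < d -> 0 < d_part d m.
Proof.
move=> d0; have [H _] := prod_pp d0 (primes_uniq m) (all_prime_primes m).
rewrite /d_part divn_gt0; last by apply: prodn_gt0 => q; apply: pp_gt0.
exact: dvdn_leq.
Qed.

Lemma logn_d_part d m q : 0 < d -> logn q (d_part d m) = if q \in primes m then 0 else logn q d.
Proof.
move=> d0; have [H1 H2] := prod_pp d0 (primes_uniq m) (all_prime_primes m).
case pq: (prime q); last by rewrite /logn pq; case: ifP.
rewrite /d_part (logn_div q H1) (H2 q pq).
by case: ifP => _; rewrite ?subnn ?subn0.
Qed.

Lemma gamma_ext c n n' : (forall q, q \in primes c -> logn q n = logn q n') ->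
  gamma c n = gamma c n'.
Proof.
move=> H; apply: eq_big_seq => q /H; rewrite /gamma_pp.
by case: eqP => [->|_] ->.
Qed.

Lemma gamma_mul p r b n : prime p -> 0 < b -> coprime p b -> 0 < r ->
  gamma (p ^ r * b) n = gamma_pp p r n * gamma b n.
Proof.
move=> pp b0 cb r0.
have pr0 : 0 < p ^ r by rewrite expn_gt0 prime_gt0.
have pnb : p \notin primes b.
  by rewrite mem_primes pp b0 /= -prime_coprime.
have E : perm_eq (primes (p ^ r * b)) (p :: primes b).
  apply: uniq_perm; first exact: primes_uniq.
    by rewrite /= pnb primes_uniq.
  move=> q; rewrite primesM // primesX // primes_prime // in_cons.
  by rewrite in_cons in_nil orbF.
rewrite /gamma (perm_big _ E) big_cons.
rewrite lognM // pfactorK // logn_coprime // addn0; congr (_ * _).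
apply: eq_big_seq => q qb; congr gamma_pp.
have qp : q != p by apply: contraNneq pnb => <-.
by rewrite lognM // (lognX q p r) (logn_prime q pp) (negbTE qp) muln0.
Qed.

Lemma half_le n : n./2 <= n.
Proof. by rewrite leq_half_double -addnn; lia. Qed.

Lemma gpp_bound p r n : prime p -> 0 < n -> gamma_pp p r n <= p ^ logn p (4 * n).
Proof.
move=> pp n0; have p0 := prime_gt0 pp.
rewrite /gamma_pp; case: eqP => [E|E].
  subst p; rewrite lognM // (_ : logn 2 4 = 2) //.
  case: ifP => [/andP[/andP[r2 _] /eqP e]|_].
    apply: leq_pexp2l => //; have := half_le r; lia.
  case: ifP => [/andP[_ e]|_] //.
  apply: leq_pexp2l => //; have := half_le (r - 1); lia.
rewrite lognM // (_ : logn p 4 = 0) ?add0n; last first.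
  rewrite (_ : 4 = 2 ^ 2) // lognX logn_prime //.
  by case: eqP => //; rewrite muln0.
case: ifP => [/andP[/andP[r2 _] e]|_].
  apply: leq_trans (_ : p ^ (r./2 - 1) * p <= _).
    by rewrite leq_mul2l; apply/orP; right; lia.
  rewrite -expnSr; apply: leq_pexp2l => //; have := half_le r; have := half_gt0 r; lia.
case: ifP => [/andP[_ /eqP e]|_] //.
apply: leq_pexp2l => //; have := half_le (r - 1); lia.
Qed.

Lemma gamma_bound c n : 0 < n -> gamma c n <= 4 * n.
Proof.
move=> n0; have M0 : 0 < 4 * n by rewrite muln_gt0 n0.
have [H _] := prod_pp M0 (primes_uniq c) (all_prime_primes c).
apply: leq_trans (dvdn_leq M0 H).
rewrite /gamma !big_seq; apply: leq_prod => q qc.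
apply: gpp_bound => //; by move: qc; rewrite mem_primes => /andP[].
Qed.

Fixpoint sumR (f : nat -> R) (n : nat) : R :=
  match n with O => R0 | S n => Rplus (sumR f n) (f n) end.
Definition Q (f : nat -> R) (N : nat) : R := sumR (fun i => f i.+1) N.

Open Scope R_scope.

Lemma sumR_S f n : sumR f n.+1 = sumR f n + f n.
Proof. by []. Qed.
Lemma sumR_ext f g n : (forall i, f i = g i) -> sumR f n = sumR g n.
Proof. move=> H; elim: n => //= n ->; by rewrite H. Qed.
Lemma sumR_plus f g n : sumR (fun i => f i + g i) n = sumR f n + sumR g n.
Proof. elim: n => /= [|n ->]; lra. Qed.
Lemma sumR_scal c f n : sumR (fun i => c * f i) n = c * sumR f n.
Proof. elim: n => /= [|n ->]; lra. Qed.
Lemma sumR_shift f n : sumR f n.+1 = f 0%N + sumR (fun i => f i.+1) n.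
Proof. elim: n => /= [|n IH]; [lra| rewrite IH /=; lra]. Qed.
Lemma sumR_zero f n : (forall i, f i = 0) -> sumR f n = 0.
Proof. move=> H; elim: n => //= n ->; rewrite H; lra. Qed.

Lemma Q_S f N : Q f N.+1 = Q f N + f N.+1.
Proof. by []. Qed.
Lemma Q_dil (a : nat) g N : (0 < a)%N ->
  Q (fun c => if (a %| c)%N then g (c %/ a)%N else 0) N = Q g (N %/ a)%N.
Proof.
move=> a0; elim: N => [|N IH]; first by rewrite div0n.
rewrite Q_S IH (divnS N a0).
case H: (a %| N.+1)%N => /=; last by rewrite add0n; lra.
by rewrite add1n Q_S.

Qed.

Lemma cv_div (u : nat -> R) L a : (0 < a)%N -> Un_cv u L -> Un_cv (fun N => u (N %/ a)%N) L.
Proof.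
move=> a0 H eps He; have [M HM] := H eps He; exists (M * a)%N => n /leP hn.
apply: HM; apply/leP.
by rewrite -(mulnK M a0) leq_div2r.
Qed.

Lemma cv_const c : Un_cv (fun _ => c) c.
Proof. move=> eps He; exists 0%N => n _; rewrite /Rdist Rminus_diag Rabs_R0; lra. Qed.

Lemma cv_scal (u : nat -> R) L c : Un_cv u L -> Un_cv (fun n => c * u n) (c * L).
Proof. move=> H; exact: (CV_mult _ _ _ _ (cv_const c) H). Qed.

Section Split.
Variable p : nat.
Hypothesis pp : prime p.

Lemma series_split Rm : forall (f h phi : nat -> R) L,
  (forall r, (Rm <= r)%N -> phi r = 0) ->
  (forall r b, (0 < b)%N -> coprime p b -> f (p ^ r * b)%N = phi r * h b) ->
  Un_cv (Q (fun b => if coprime p b then h b else 0)) L ->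
  Un_cv (Q f) (sumR phi Rm * L).
Proof.
have p0 : (0 < p)%N by apply: prime_gt0.
elim: Rm => [|Rm IH] f h phi L Hphi Hf HL.
  have f0 : forall c, (0 < c)%N -> f c = 0.
    move=> c c0; have [m cm Ec] := pfactor_coprime pp c0.
    have m0 : (0 < m)%N by move: c0; rewrite Ec muln_gt0 => /andP[].
    rewrite Ec mulnC Hf ?Hphi //; lra.
  apply: (Un_cv_ext (fun _ => 0)); last by rewrite /= Rmult_0_l; exact: cv_const.
  by move=> n; rewrite /Q sumR_zero // => i; rewrite f0.
set f1 := fun b => f (p * b)%N.
have H1 := IH f1 h (fun r => phi r.+1) L (fun r hr => Hphi r.+1 hr).
have {}H1 : Un_cv (Q f1) (sumR (fun r => phi r.+1) Rm * L).
  apply: H1 => // r b b0 cb; by rewrite /f1 mulnA -expnS Hf.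
have H2 := cv_div p0 H1.
have H3 := cv_scal (phi 0%N) HL.
have H4 := CV_plus _ _ _ _ H3 H2.
rewrite sumR_shift Rmult_plus_distr_r.
apply: (Un_cv_ext _ _ _ _ H4) => N.
rewrite -Q_dil // /Q -sumR_scal -sumR_plus; apply: sumR_ext => i.
case: ifP => cp.
  have : ~~ (p %| i.+1)%N by rewrite -prime_coprime.
  move/negbTE => ->; rewrite -[X in f X]mul1n -(expn0 p) Hf //; lra.
have : (p %| i.+1)%N by move: cp; rewrite prime_coprime // => /negbFE.
move=> dp; rewrite dp /f1 mulnC divnK //; lra.
Qed.
End Split.

Lemma inv_sq_bound n : sumR (fun i => 1 / (INR i.+1)^2) n <= 2.
Proof.
suff H : forall n, sumR (fun i => 1 / (INR i.+1)^2) n.+1 <= 2 - 1 / INR n.+1.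
  case: n => [/=|n]; first lra.
  have := H n; have : 0 < 1 / INR n.+1.
    apply: Rdiv_lt_0_compat; first lra. apply: lt_0_INR; apply/ltP; done.
  lra.
clear n; elim=> [|n IH]; first by rewrite /=; lra.
rewrite sumR_S.
have x0 := pos_INR n.
rewrite !S_INR in IH *.
set x := INR n in IH x0 *.
have E : 1 / (x + 1) - 1 / (x + 1 + 1) - 1 / (x + 1 + 1) ^ 2 = 1 / ((x + 1) * (x + 1 + 1) ^ 2).
  field; lra.
have P : 0 < 1 / ((x + 1) * (x + 1 + 1) ^ 2).
  apply: Rdiv_lt_0_compat; first lra.
  apply: Rmult_lt_0_compat; first lra. apply: pow_lt; lra.
lra.
Qed.

Lemma cv_bound (h : nat -> R) C :
  (forall c, (0 < c)%N -> 0 <= h c <= C / (INR c)^2) -> exists L, Un_cv (Q h) L.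
Proof.
move=> H.
have C0 : 0 <= C.
  have [a b] := H 1%N isT. move: b; rewrite (_ : INR 1 = 1) // pow1 Rdiv_1_r => b; lra.
have [L HL] : {L | Un_cv (Q h) L}; last by exists L.
apply: growing_cv.
  move=> n; rewrite /Q /=; have [a _] := H n.+1 isT; lra.
exists (C * 2) => _ [n ->].
apply: Rle_trans (_ : C * sumR (fun i => 1 / (INR i.+1)^2) n <= _); last first.
  by apply: Rmult_le_compat_l => //; apply: inv_sq_bound.
rewrite -sumR_scal /Q; elim: n => [/=|n IH]; first lra.
rewrite !sumR_S; have [_ b] := H n.+1 isT.
suff : C / INR n.+1 ^ 2 = C * (1 / INR n.+1 ^ 2) by lra.
rewrite /Rdiv; ring.
Qed.

Lemma INR_muln m n : INR (m * n)%N = INR m * INR n.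
Proof. exact: mult_INR. Qed.
Lemma INR_sq m : INR (m ^ 2)%N = INR m ^ 2.
Proof. by rewrite (_ : (m ^ 2 = m * m)%N) ?mulnn // INR_muln /=; ring. Qed.

Lemma estar_term_eq K x c :
  estar_term K x c = INR (gcdn c (2 * K) ^ 2 * gamma c (x ^ 2))%N / INR c ^ 2.
Proof. rewrite /estar_term INR_muln INR_sq /Rdiv; ring. Qed.

Lemma estar_term_bound K x c : (0 < K)%N -> (0 < x)%N -> (0 < c)%N ->
  0 <= estar_term K x c <= INR ((2 * K) ^ 2 * (4 * x ^ 2))%N / INR c ^ 2.
Proof.
move=> K0 x0 c0; rewrite estar_term_eq.
have cp : 0 < INR c ^ 2 by apply: pow_lt; apply: lt_0_INR; apply/ltP.
split.
  apply: Rmult_le_pos; first exact: pos_INR.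
  by apply: Rlt_le; apply: Rinv_0_lt_compat.
apply: Rmult_le_compat_r; first by apply: Rlt_le; apply: Rinv_0_lt_compat.
apply: le_INR; apply/leP; apply: leq_mul.
  rewrite leq_exp2r //; apply: dvdn_leq; [by rewrite muln_gt0 K0 | exact: dvdn_gcdr].
apply: gamma_bound; by rewrite expn_gt0 x0.
Qed.

Lemma estar_cv K x : (0 < K)%N -> (0 < x)%N -> exists L, Un_cv (Q (estar_term K x)) L.
Proof.
move=> K0 x0; apply: cv_bound => c c0; exact: estar_term_bound.
Qed.

Lemma sum_f_Q f n : sum_f_R0 (fun i => f i.+1) n = Q f n.+1.
Proof. elim: n => [|n IH] /=; [rewrite /Q /=; ring | rewrite IH]. by []. Qed.

Lemma estar_val K x L : Un_cv (Q (estar_term K x)) L -> estar K x = L.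
Proof.
move=> H.
have S : infinite_sum (fun i => estar_term K x i.+1) L.
  move=> eps He; have [N HN] := H eps He; exists N => n hn.
  rewrite sum_f_Q; apply: HN; apply/leP; move/leP: hn => hn; exact: leqW.
rewrite /estar /series_value; case: excluded_middle_informative => [E|E].
  case: (constructive_indefinite_description _ E) => l /= Hl.
  exact: uniqueness_sum Hl S.
by exfalso; apply: E; exists L.
Qed.

Definition phi (p K x r : nat) : R :=
  if r == 0%N then 1 else
  INR (gcdn (p ^ r) (2 * K)) ^ 2 / INR (p ^ r) ^ 2 * INR (gamma_pp p r (x ^ 2)).

Lemma term_factor p K x r b : prime p -> (0 < K)%N -> (0 < b)%N -> coprime p b ->
  estar_term K x (p ^ r * b)%N = phi p K x r * estar_term K x b.
Proof.
move=> pp K0 b0 cb; rewrite /phi; case: eqP => [->|/eqP r0].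
  by rewrite expn0 mul1n Rmult_1_l.
have pr0 : (0 < p ^ r)%N by rewrite expn_gt0 prime_gt0.
rewrite -lt0n in r0.
rewrite /estar_term gcdM_coprime ?muln_gt0 // ?coprimeXl //.
rewrite gamma_mul // !INR_muln.
have h1 : INR (p ^ r) <> 0 by apply: not_0_INR; apply/eqP; rewrite -lt0n.
have h2 : INR b <> 0 by apply: not_0_INR; apply/eqP; rewrite -lt0n.
field; split => //.
Qed.

Lemma gpp_zero p r n : (logn p n + 3 <= r)%N -> gamma_pp p r n = 0%N.
Proof.
move=> H; rewrite /gamma_pp; case: eqP => [E|_].
  subst p; case: ifP => [/andP[_ /eqP e]|_]; first lia.
  case: ifP => [/andP[_ e]|_] //; lia.
case: ifP => [/andP[_ e]|_]; first lia.
case: ifP => [/andP[_ /eqP e]|_] //; lia.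
Qed.

Lemma phi_zero p K x r : (logn p (x ^ 2) + 3 <= r)%N -> phi p K x r = 0.
Proof.
move=> H; rewrite /phi; case: eqP => [E|_]; first by rewrite E addn3 in H.
by rewrite gpp_zero // Rmult_0_r.
Qed.

Lemma gcd_pow p r s t : prime p -> (0 < t)%N -> coprime p t ->
  gcdn (p ^ r) (p ^ s * t) = (p ^ (minn r s))%N.
Proof.
move=> pp t0 ct; have p0 := prime_gt0 pp.
apply: eqn_from_log; rewrite ?gcdn_gt0 ?expn_gt0 ?p0 //.
move=> q; rewrite logn_gcd ?muln_gt0 ?expn_gt0 ?p0 ?t0 // lognM ?expn_gt0 ?p0 //.
rewrite !lognX logn_prime //; case: (eqVneq q p) => [->|nq] /=.
  rewrite logn_coprime //; lia.
lia.
Qed.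

Lemma R2_ne0 p : prime p -> INR p <> 0.
Proof. move=> pp; apply: not_0_INR; apply/eqP; rewrite -lt0n prime_gt0 //. Qed.

Lemma INR_pexp p r : INR (p ^ r)%N = INR p ^ r.
Proof. elim: r => [|r IH] //=; by rewrite expnS INR_muln IH. Qed.

Lemma pexp_ne0 p r : prime p -> INR (p ^ r)%N <> 0.
Proof. move=> pp; rewrite INR_pexp; apply: pow_nonzero; exact: R2_ne0. Qed.

Definition cpR (p : nat) : R := (INR p ^ 2 - 1) / (INR p ^ 2 + 1).

Lemma local_odd p k x y m : prime p -> p != 2%N -> (0 < k)%N -> ~~ (p %| k) ->
  logn p (y ^ 2) = 0%N ->
  sumR (phi p (p * k) x) m.+3 =
  INR p ^ 2 * (sumR (phi p k x) m.+3 - cpR p * sumR (phi p k y) m.+3).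
Proof.
move=> pp p2 k0 pk Ly; have p0 := prime_gt0 pp.
have c2k : coprime p (2 * k).
  rewrite prime_coprime // Euclid_dvdM // negb_or pk andbT.
  apply/negP => /(@dvdn_leq p 2 isT) h; have := prime_gt1 pp; move/eqP: p2; lia.
have g2 : forall r, gcdn (p ^ r) (2 * k) = 1%N by move=> r; apply/eqP; apply: coprimeXl.
have g1 : forall r, gcdn (p ^ r.+1) (2 * (p * k)) = p.
  move=> r; rewrite (_ : (2 * (p * k) = p ^ 1 * (2 * k))%N); last by rewrite expn1 mulnCA.
  rewrite gcd_pow ?muln_gt0 ?k0 // (_ : minn r.+1 1 = 1%N) ?expn1 //; lia.
have pn0 := R2_ne0 pp.
have eB : forall r, phi p (p * k) x r.+1 = INR p ^ 2 * phi p k x r.+1.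
  move=> r; rewrite /phi /= g1 g2 /=; field; exact: pexp_ne0.
have e1 : phi p k y 1 = 1 / INR p ^ 2.
  rewrite /phi /= g2 /gamma_pp (negbTE p2) Ly /= expn1; field; exact: pn0.
have e2 : phi p k y 2 = 0.
  rewrite /phi /= /gamma_pp (negbTE p2) Ly /=; ring.
have e3 : forall r, phi p k y r.+3 = 0.
  move=> r; apply: phi_zero; rewrite Ly; lia.
rewrite !sumR_shift eB e1 e2 (sumR_zero _ e3).
rewrite !eB (sumR_ext _ (fun i => eB i.+2)) sumR_scal.
rewrite (_ : phi p (p * k) x 0 = 1) // (_ : phi p k x 0 = 1) // (_ : phi p k y 0 = 1) //.
rewrite /cpR; field; split => //.
have := pow2_ge_0 (INR p); lra.
Qed.

Lemma local_two k x y m : (0 < k)%N -> ~~ (2 %| k)%N ->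
  logn 2 (y ^ 2) = 0%N ->
  sumR (phi 2 (2 * k) x) m.+3 =
  INR 2 ^ 2 * (sumR (phi 2 k x) m.+3 - cpR 2 * sumR (phi 2 k y) m.+3).
Proof.
move=> k0 pk Ly.
have c2 : coprime 2 k by rewrite prime_coprime.
have gA : forall r, gcdn (2 ^ r.+1) (2 * k) = 2%N.
  move=> r; rewrite -{2}(expn1 2) gcd_pow // (_ : minn r.+1 1 = 1%N) //; lia.
have gB : forall r, gcdn (2 ^ r.+2) (2 * (2 * k)) = 4%N.
  move=> r; rewrite mulnA -(expnS 2 1) gcd_pow // (_ : minn r.+2 2 = 2%N) //; lia.
have gB1 : gcdn (2 ^ 1) (2 * (2 * k)) = 2%N.
  by rewrite mulnA -(expnS 2 1) gcd_pow.
have eA1 : phi 2 k x 1 = 1 by rewrite /phi /= gA /gamma_pp /=; field.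
have eB1 : phi 2 (2 * k) x 1 = 1 by rewrite /phi /= gB1 /gamma_pp /=; field.
have eB : forall r, phi 2 (2 * k) x r.+2 = INR 2 ^ 2 * phi 2 k x r.+2.
  move=> r; rewrite /phi /= gA gB /=; field; exact: (@pexp_ne0 2).
have e1 : phi 2 k y 1 = 1 by rewrite /phi /= gA /gamma_pp /=; field.
have e2 : phi 2 k y 2 = 1 / 2.
  rewrite /phi /= gA /gamma_pp Ly /=; field.
have e3 : forall r, phi 2 k y r.+3 = 0.
  move=> r; apply: phi_zero; rewrite Ly; lia.
rewrite !sumR_shift eA1 eB1 e1 e2 (sumR_zero _ e3).
rewrite !eB (sumR_ext _ (fun i => eB i.+1)) sumR_scal.
rewrite (_ : phi 2 (2 * k) x 0 = 1) // (_ : phi 2 k x 0 = 1) // (_ : phi 2 k y 0 = 1) //.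
rewrite /cpR /=; field.
Qed.

Lemma keyL p k d : prime p -> (0 < k)%N -> ~~ (p %| k) -> (0 < d)%N ->
  estar (p * k) d = INR p ^ 2 * (estar k d - cpR p * estar k (d_part d p)).
Proof.
move=> pp k0 pk d0; have p0 := prime_gt0 pp.
set dp := d_part d p.
have dp0 : (0 < dp)%N by apply: d_part_gt0.
have Ldp : logn p (dp ^ 2) = 0%N.
  by rewrite lognX logn_d_part // primes_prime // mem_seq1 eqxx muln0.
have Lq : forall q, q != p -> logn q (dp ^ 2) = logn q (d ^ 2).
  move=> q nq; rewrite !lognX logn_d_part // primes_prime // mem_seq1 (negbTE nq) //.
have pk0 : (0 < p * k)%N by rewrite muln_gt0 p0 k0.
set FA := estar_term k d.
have [R HR] : exists R, Un_cv (Q (fun b => if coprime p b then FA b else 0)) R.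
  apply: (@cv_bound _ (INR ((2 * k) ^ 2 * (4 * d ^ 2))%N)) => c c0.
  have [h1 h2] := estar_term_bound k0 d0 c0.
  case: ifP => _; first by split.
  split; first lra.
  apply: Rmult_le_pos; first exact: pos_INR.
  apply: Rlt_le; apply: Rinv_0_lt_compat; apply: pow_lt; apply: lt_0_INR; apply/ltP.
  by [].
set m := logn p (d ^ 2).
have HA : Un_cv (Q FA) (sumR (phi p k d) m.+3 * R).
  apply: (series_split pp _ _ HR).
    by move=> r hr; apply: phi_zero; rewrite addn3.
  by move=> r b b0 cb; apply: term_factor.
have HB : Un_cv (Q (estar_term (p * k) d)) (sumR (phi p (p * k) d) m.+3 * R).
  apply: (series_split pp _ _ HR).
    by move=> r hr; apply: phi_zero; rewrite addn3.
  move=> r b b0 cb; rewrite term_factor //; congr (_ * _).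
  rewrite /FA /estar_term mulnCA Gauss_gcdr // coprime_sym //.
have HA1 : Un_cv (Q (estar_term k dp)) (sumR (phi p k dp) m.+3 * R).
  apply: (series_split pp _ _ HR).
    move=> r hr; apply: phi_zero; rewrite Ldp; apply: leq_trans hr; lia.
  move=> r b b0 cb; rewrite term_factor //; congr (_ * _).
  rewrite /FA /estar_term (@gamma_ext b (dp ^ 2) (d ^ 2)) // => q qb.
  apply: Lq; apply: contraTneq qb => ->.
  by rewrite mem_primes pp b0 /= -prime_coprime.
rewrite (estar_val HA) (estar_val HB) (estar_val HA1).
have E : sumR (phi p (p * k) d) m.+3 =
   INR p ^ 2 * (sumR (phi p k d) m.+3 - cpR p * sumR (phi p k dp) m.+3).
  case: (eqVneq p 2%N) => [E|p2]; last exact: local_odd.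
  subst p; exact: local_two.
rewrite E; ring.
Qed.

Lemma primes_perm p r b : prime p -> (0 < b)%N -> coprime p b -> (0 < r)%N ->
  perm_eq (primes (p ^ r * b)) (p :: primes b).
Proof.
move=> pp b0 cb r0.
have pr0 : (0 < p ^ r)%N by rewrite expn_gt0 prime_gt0.
have pnb : p \notin primes b by rewrite mem_primes pp b0 /= -prime_coprime.
apply: uniq_perm; first exact: primes_uniq.
  by rewrite /= pnb primes_uniq.
move=> q; rewrite primesM // primesX // primes_prime // in_cons.
by rewrite in_cons in_nil orbF.
Qed.

Lemma primes_perm1 p b : prime p -> (0 < b)%N -> ~~ (p %| b) ->
  perm_eq (primes (p * b)) (p :: primes b).
Proof.
move=> pp b0 pb; rewrite -{1}(expn1 p); apply: primes_perm => //.
by rewrite prime_coprime.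
Qed.

Lemma sqf_mul p b : prime p -> (0 < b)%N -> ~~ (p %| b) ->
  squarefree (p * b) = squarefree b.
Proof.
move=> pp b0 pb; have p0 := prime_gt0 pp.
rewrite /squarefree (perm_all _ (primes_perm1 pp b0 pb)) /=.
have Lp : logn p (p * b) = 1%N.
  by rewrite lognM // logn_prime // eqxx logn_coprime // prime_coprime.
rewrite Lp eqxx andTb.
apply: eq_in_all; move=> q qb; rewrite lognM // (logn_prime q pp).
have -> : (q == p) = false.
  apply/negbTE; apply: contraNneq pb => E; move: qb; rewrite E mem_primes => /and3P[].
  by [].
by [].
Qed.

Lemma size_primes_mul p b : prime p -> (0 < b)%N -> ~~ (p %| b) ->
  size (primes (p * b)) = (size (primes b)).+1.
Proof. by move=> pp b0 pb; rewrite (perm_size (primes_perm1 pp b0 pb)). Qed.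

HB.instance Definition _ := Monoid.isComLaw.Build R R0 Rplus
  (fun a b c => esym (Rplus_assoc a b c)) Rplus_comm Rplus_0_l.
HB.instance Definition _ := Monoid.isComLaw.Build R R1 Rmult
  (fun a b c => esym (Rmult_assoc a b c)) Rmult_comm Rmult_1_l.

Lemma foldr_perm_mul (F : nat -> R) s1 s2 : perm_eq s1 s2 ->
  foldr Rmult R1 (map F s1) = foldr Rmult R1 (map F s2).
Proof. by move=> H; rewrite !foldrE !big_map; apply: perm_big. Qed.

Lemma mobius_mul p b : prime p -> (0 < b)%N -> ~~ (p %| b) ->
  mobius (p * b) = - mobius b.
Proof.
move=> pp b0 pb; rewrite /mobius sqf_mul // size_primes_mul //.
case: ifP => _ /=; ring.
Qed.

Lemma pfp_mul p b : prime p -> (0 < b)%N -> ~~ (p %| b) ->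
  prime_factor_prod (p * b) = cpR p * prime_factor_prod b.
Proof.
move=> pp b0 pb; rewrite /prime_factor_prod (foldr_perm_mul _ (primes_perm1 pp b0 pb)) /=.
by [].
Qed.

Lemma d_part_mul d p b : prime p -> (0 < d)%N -> (0 < b)%N -> ~~ (p %| b) ->
  d_part d (p * b) = d_part (d_part d p) b.
Proof.
move=> pp d0 b0 pb; have p0 := prime_gt0 pp.
apply: eqn_from_log; rewrite ?d_part_gt0 //.
move=> q; rewrite !logn_d_part ?d_part_gt0 // primesM // primes_prime // mem_seq1.
by case: (q == p); case: (q \in primes b).
Qed.

Lemma foldr_perm (F : nat -> R) s1 s2 : perm_eq s1 s2 ->
  foldr Rplus R0 (map F s1) = foldr Rplus R0 (map F s2).
Proof. by move=> H; rewrite !foldrE !big_map; apply: perm_big. Qed.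

Lemma foldr_cat (F : nat -> R) s1 s2 :
  foldr Rplus R0 (map F (s1 ++ s2)) = foldr Rplus R0 (map F s1) + foldr Rplus R0 (map F s2).
Proof. elim: s1 => /= [|x s IH]; [ring | rewrite IH; ring]. Qed.

Lemma foldr_scal (F : nat -> R) c s :
  foldr Rplus R0 (map (fun x => c * F x) s) = c * foldr Rplus R0 (map F s).
Proof. elim: s => /= [|x s IH]; [ring | rewrite IH; ring]. Qed.

Lemma divisors_perm p k : prime p -> (0 < k)%N -> ~~ (p %| k) ->
  perm_eq (divisors (p * k)) (divisors k ++ map (muln p) (divisors k)).
Proof.
move=> pp k0 pk; have p0 := prime_gt0 pp.
have pk0 : (0 < p * k)%N by rewrite muln_gt0 p0.
have inj : injective (muln p) by move=> a b /eqP; rewrite eqn_pmul2l // => /eqP.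
apply: uniq_perm; first exact: divisors_uniq.
  rewrite cat_uniq divisors_uniq (map_inj_uniq inj) divisors_uniq andbT andTb.
  apply/hasPn => x /mapP [y yk ->]; rewrite -dvdn_divisors //.
  apply/negP => /(dvdn_trans (dvdn_mulr y (dvdnn p))); by rewrite (negbTE pk).
move=> x; rewrite mem_cat -!dvdn_divisors //.
case px: (p %| x)%N.
  have [y ->] : exists y, x = (p * y)%N by exists (x %/ p); rewrite mulnC divnK.
  rewrite dvdn_pmul2l // mem_map // -dvdn_divisors //.
  case yk: (y %| k)%N; rewrite ?orbT // orbF; apply/esym/negbTE/negP.
  move/(dvdn_trans (dvdn_mulr y (dvdnn p))); by rewrite (negbTE pk).
have cx : coprime x p by rewrite coprime_sym prime_coprime // px.
rewrite Gauss_dvdr //.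
have -> : (x \in map (muln p) (divisors k)) = false.
  apply/negbTE/mapP => [[y _ E]]; move: px; rewrite E dvdn_mulr //.
by rewrite orbF.
Qed.

Definition Fm (d m : nat) : R :=
  Rmult (Rmult (mobius m) (prime_factor_prod m)) (estar 1 (d_part d m)).

Lemma main_ind k : (0 < k)%N -> squarefree k -> forall d, (0 < d)%N ->
  estar k d = INR k ^ 2 * foldr Rplus R0 (map (Fm d) (divisors k)).
Proof.
elim/ltn_ind: k => k IH k0 sk d d0.
case: (ltngtP k 1) => [lt|gt|eq].
- by move: k0; rewrite lt0n; move: lt; rewrite ltnS leqn0 => /eqP ->.
- set p := pdiv k; have pp : prime p := pdiv_prime gt.
  have p0 := prime_gt0 pp.
  set k' := (k %/ p)%N.
  have Ek : k = (p * k')%N by rewrite mulnC divnK // pdiv_dvd.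
  have k'0 : (0 < k')%N by move: k0; rewrite Ek muln_gt0 => /andP[].
  have pink : p \in primes k by rewrite mem_primes pp k0 pdiv_dvd.
  have lp : logn p k = 1%N by move/allP: sk => /(_ p pink) /eqP.
  have lpk' : logn p k' = 0%N.
    move: lp; rewrite Ek lognM // (logn_prime p pp) eqxx; lia.
  have pk' : ~~ (p %| k').
    apply/negP => H; have : (0 < logn p k')%N by rewrite logn_gt0 mem_primes pp k'0 H.
    by rewrite lpk'.
  have sk' : squarefree k'.
    apply/allP => q qk'.
    have qk : q \in primes k by rewrite Ek primesM // qk' orbT.
    have qp : q != p by apply: contraNneq pk' => E; move: qk'; rewrite E mem_primes => /and3P[].
    move/allP: sk => /(_ q qk); rewrite Ek lognM // (logn_prime q pp) (negbTE qp).
    by rewrite add0n.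
  have k'k : (k' < k)%N by rewrite Ek ltn_Pmull // prime_gt1.
  rewrite {1}Ek keyL // (IH k') // (IH k') ?d_part_gt0 //.
  rewrite Ek (foldr_perm _ (divisors_perm pp k'0 pk')) foldr_cat -map_comp.
  have -> : map (Fm d \o muln p) (divisors k') =
            map (fun y => - cpR p * Fm (d_part d p) y) (divisors k').
    apply/eq_in_map; move=> y; rewrite -dvdn_divisors // => yk.
    have y0 : (0 < y)%N by apply: dvdn_gt0 yk.
    have py : ~~ (p %| y) by apply: contra pk' => /dvdn_trans; apply.
    rewrite /= /Fm mobius_mul // pfp_mul // d_part_mul //; ring.
  rewrite foldr_scal INR_muln; ring.
- subst k.
  have P1 : primes 1 = [::] by apply/eqP; rewrite primes_eq0.
  have D1 : d_part d 1 = d by rewrite /d_part P1 big_nil divn1.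
  rewrite (_ : divisors 1 = [:: 1%N]) // /= /Fm D1 /mobius /squarefree P1 /prime_factor_prod P1 /=.
  ring.
Qed.

Close Scope R_scope.

Theorem lemma5p3 (k d : nat) (hk : 0 < k) (hsq : squarefree k) (hd : 0 < d) :
  estar k d =
  Rmult (pow (INR k) 2)
   (foldr Rplus R0
     (map (fun m => Rmult (Rmult (mobius m) (prime_factor_prod m)) (estar 1 (d_part d m)))
          (divisors k))).
Proof. exact: main_ind. Qed.
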